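(* Fix a directed edge set $\mathcal{E}$ and a randomized design with $0<\mathbb{E}[z_i]<1$ for all $i$. Suppose there exist reals $\rho_i\in[0,1)$, $i\in[n]$, such that for every $(k,i)\in\mathcal{E}$, $\mathbb{P}(z_k=1)>0$ and $\mathbb{P}(z_i=1\mid z_k=1)=\rho_i$. Then under the heterogeneous additive network effects model the estimator \[\widehat{\mathrm{ATE}}_{-\alpha}=\frac1n\sum_{i\in[n]}\Big(\frac{z_i}{\mathbb{E}[z_i]}-\frac{(1-z_i)\rho_i}{\mathbb{E}[z_i](1-\rho_i)}\Big)\big(Y_i({\bf z})-\alpha_i\big)\] is unbiased for $\mathrm{ATE}$.
   Context: Population $[n]$; random treatment vector ${\bf z}\in\{0,1\}^n$ drawn from a randomized design. Heterogeneous additive network effects model: $Y_i({\bf z})=\alpha_i+\beta_iz_i+\sum_{k\in[n]}\gamma_{ki}z_k$ with deterministic real parameters, $\gamma_{ki}=0$ unless $(k,i)\in\mathcal{E}$, where $\mathcal{E}$ is a set of ordered pairs $(k,i)$, $k\neq i$; $\alpha_i=Y_i({\bf 0})$. $\mathrm{ATE}=\frac1n\sum_i\beta_i$. (For $i$ with no incoming edges, $\rho_i\in[0,1)$ is arbitrary.) *)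

(* Defs.v *)
From HB Require Import structures.
From mathcomp Require Import all_boot all_order all_algebra.
Set Implicit Arguments. Unset Strict Implicit. Unset Printing Implicit Defensive.
Import Order.TTheory GRing.Theory Num.Theory.
Local Open Scope ring_scope.

Definition assign (n : nat) := {ffun 'I_n -> bool}.

Section Defs.
Variables (R : realFieldType) (n : nat).

Definition is_design (p : assign n -> R) : Prop :=
  (forall z, 0 <= p z) /\ \sum_(z : assign n) p z = 1.

Definition Exp (p : assign n -> R) (f : assign n -> R) : R :=
  \sum_(z : assign n) p z * f z.
Definition Prob (p : assign n -> R) (A : pred (assign n)) : R :=
  \sum_(z : assign n | A z) p z.
Definition CondProb (p : assign n -> R) (A B : pred (assign n)) : R :=
  Prob p [pred z | A z && B z] / Prob p B.

Definition zr (z : assign n) (i : 'I_n) : R := (z i)%:R.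

Definition Yout (alpha beta : 'I_n -> R) (gamma : 'I_n -> 'I_n -> R)
  (z : assign n) (i : 'I_n) : R :=
  alpha i + beta i * zr z i + \sum_(k < n) gamma k i * zr z k.

Definition ATE (beta : 'I_n -> R) : R := n%:R^-1 * \sum_(i < n) beta i.

Definition ATE_hat_minus_alpha (p : assign n -> R) (rho alpha beta : 'I_n -> R)
  (gamma : 'I_n -> 'I_n -> R) (z : assign n) : R :=
  n%:R^-1 * \sum_(i < n)
    ((zr z i / Exp p (fun z => zr z i)
      - (1 - zr z i) * rho i / (Exp p (fun z => zr z i) * (1 - rho i)))
     * (Yout alpha beta gamma z i - alpha i)).

End Defs.

Arguments zr {R n} z i.
Arguments Exp {R n} p f.
Arguments Prob {R n} p A.
Arguments CondProb {R n} p A B.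
Arguments is_design {R n} p.
Arguments Yout {R n} alpha beta gamma z i.
Arguments ATE {R n} beta.
Arguments ATE_hat_minus_alpha {R n} p rho alpha beta gamma z.

(* Main.v *)
Require Import Defs.
From HB Require Import structures.
From mathcomp Require Import all_boot all_order all_algebra.
From mathcomp Require Import ring lra.
Import Order.TTheory GRing.Theory Num.Theory.
Local Open Scope ring_scope.

Section H.
Variables (R : realFieldType) (n : nat) (p : assign n -> R).

Lemma Exp_ext f g : (forall z, f z = g z) -> Exp p f = Exp p g.
Proof. by move=> H; apply: eq_bigr => z _; rewrite H. Qed.

Lemma ExpD f g : Exp p (fun z => f z + g z) = Exp p f + Exp p g.
Proof. by rewrite /Exp -big_split; apply: eq_bigr => z _; rewrite mulrDr. Qed.

Lemma ExpB f g : Exp p (fun z => f z - g z) = Exp p f - Exp p g.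
Proof.
rewrite /Exp -sumrB; apply: eq_bigr => z _; by rewrite mulrBr.
Qed.

Lemma ExpZ c f : Exp p (fun z => c * f z) = c * Exp p f.
Proof. rewrite /Exp mulr_sumr; apply: eq_bigr => z _; ring. Qed.

Lemma Exp_sum (F : 'I_n -> assign n -> R) :
  Exp p (fun z => \sum_(k < n) F k z) = \sum_(k < n) Exp p (F k).
Proof.
rewrite /Exp (exchange_big) /=; apply: eq_bigr => z _; by rewrite mulr_sumr.
Qed.

Lemma Prob_Exp (A : pred (assign n)) : Prob p A = Exp p (fun z => (A z)%:R).
Proof.
rewrite /Prob big_mkcond; apply: eq_bigr => z _; case: (A z) => /=;
  by rewrite ?mulr1 ?mulr0.
Qed.
End H.

Theorem theorem4 (R : realFieldType) (n : nat) (E : rel 'I_n)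
  (p : assign n -> R) (rho alpha beta : 'I_n -> R) (gamma : 'I_n -> 'I_n -> R) :
  (* E is a set of ordered pairs (k,i) with k <> i *)
  (forall k i, E k i -> k != i) ->
  is_design p ->
  (forall i, 0 < Exp p (fun z => zr z i) < 1) ->
  (forall i, 0 <= rho i < 1) ->
  (forall k i, E k i ->
     0 < Prob p (fun z => z k) /\
     CondProb p (fun z => z i) (fun z => z k) = rho i) ->
  (* network effects supported on E *)
  (forall k i, ~~ E k i -> gamma k i = 0) ->
  Exp p (ATE_hat_minus_alpha p rho alpha beta gamma) = ATE beta.
Proof.
move=> _ _ Hpi Hrho HE Hg.
rewrite /ATE_hat_minus_alpha ExpZ Exp_sum /ATE; congr (_ * _).
apply: eq_bigr => i _.
set pi := Exp p (fun z => zr z i).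
have pi0 : pi != 0 by have /andP[h _] := Hpi i; rewrite gt_eqF.
have r1 : 1 - rho i != 0 by have /andP[_ h] := Hrho i; rewrite subr_eq0 eq_sym lt_eqF.
set w := fun z : assign n => zr z i / pi - (1 - zr z i) * rho i / (pi * (1 - rho i)).
have wi : forall z, w z * zr z i = zr z i / pi.
  by move=> z; rewrite /w /zr; case: (z i) => /=;
    rewrite ?subrr ?mul0r ?mulr0 ?subr0 ?mulr1.
rewrite (@Exp_ext _ _ p _ (fun z => beta i * (zr z i / pi) +
    \sum_(k < n) gamma k i * (w z * zr z k))); last first.
  move=> z; rewrite /Yout.
  rewrite (_ : \sum_(k < n) gamma k i * (w z * zr z k) = w z * \sum_(k < n) gamma k i * zr z k);
    last by rewrite mulr_sumr; apply: eq_bigr => k _; ring.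
  apply: (@eq_trans _ _ (beta i * (w z * zr z i) + w z * \sum_(k < n) gamma k i * zr z k));
    last by rewrite wi.
  rewrite /w; ring.
rewrite ExpD ExpZ Exp_sum big1 ?addr0.
  rewrite (@Exp_ext _ _ p _ (fun z => pi^-1 * zr z i)); last by move=> z; rewrite mulrC.
  by rewrite ExpZ -/pi mulVf // mulr1.
move=> k _; rewrite ExpZ; case: (boolP (E k i)) => Eki; last by rewrite Hg // mul0r.
have [Pk Hc] := HE k i Eki.
have -> : Exp p (fun z => w z * zr z k) =
  pi^-1 * Exp p (fun z => (z i && z k)%:R) -
  (rho i / (pi * (1 - rho i))) * (Exp p (fun z => (z k)%:R) - Exp p (fun z => (z i && z k)%:R)).
  rewrite -ExpB -!ExpZ -ExpB; apply: Exp_ext => z.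
  rewrite /w /zr; case: (z i); case: (z k) => /=; ring.
move: Hc; rewrite /CondProb !Prob_Exp.
set A := Exp p _; set B := Exp p _ => Hc.
have B0 : B != 0 by move: Pk; rewrite Prob_Exp => Pk; rewrite gt_eqF.
have -> : A = rho i * B by rewrite -Hc divfK.
have e : (1 - rho i)^-1 * (1 - rho i) = 1 by rewrite mulVf.
rewrite invfM.
clearbody A B w pi.
apply: (@eq_trans _ _ (gamma k i * (pi^-1 * rho i * B) * (1 - (1 - rho i)^-1 * (1 - rho i)))).
  move: ((1 - rho i)^-1) => c; move: (pi^-1) (rho i) (gamma k i) => a r g.
  ring.
by rewrite e subrr mulr0.
Qed.
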